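(* Let $K(1,3)$ be the Kolakoski sequence over $\{1,3\}$ and let $B_n$ ($n\ge1$) be as defined in the context. Then for all $n\ge 1$: (i) $B_n$ is the prefix of $K(1,3)$ of length $|B_n|$; (ii) $B_{n+1}=\mathcal{G}(R(B_n),1)$. Consequently $K(1,3)=\lim_{n\to\infty}B_n$.
   Context: $K(1,3)$ is the unique infinite sequence over the alphabet $\{1,3\}$ beginning with $1$ that equals its own run-length encoding, i.e. the sequence of lengths of its maximal runs of equal symbols is the sequence itself ($K(1,3)=1\,3\,3\,3\,1\,1\,1\,3\,3\,3\,1\,3\dots$). Generation operator: for a finite vector $R=\langle r_1,\dots,r_m\rangle$ of positive integers and $s\in\{1,3\}$, $\mathcal{G}(R,s)= s^{r_1}\,(4-s)^{r_2}\,s^{r_3}\cdots$ (the $i$-th run consists of $r_i$ copies of $s$ if $i$ is odd and of $4-s$ if $i$ is even), of length $\sum_i r_i$. For a finite word $W$ over $\{1,3\}$, $R(W)$ denotes $W$ itself regarded as a vector of positive integers. Define $B_1=\mathcal{G}(\langle 1,3,3,3,1\rangle,1)=1\,3\,3\,3\,1\,1\,1\,3\,3\,3\,1$, $P_1=3$, and for $n\ge1$: $B_{n+1}=B_n\,P_n\,B_n$ (concatenation), $P_{n+1}=\mathcal{G}(R(P_n),3)$. The limit $\lim B_n$ is meaningful since each $B_n$ is a prefix of $B_{n+1}$. *)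

(* Defs.v *)
From mathcomp Require Import all_boot.
Set Implicit Arguments. Unset Strict Implicit. Unset Printing Implicit Defensive.

(* Infinite sequences over nat are functions nat -> nat (0-indexed). *)

(* start position of the i-th maximal run (0-indexed) when the run lengths
   are given by k itself: s_i = k 0 + ... + k (i-1). *)
Definition run_start (k : nat -> nat) (i : nat) : nat := \sum_(j < i) k j.

(* k is K(1,3): over {1,3}, begins with 1, and its sequence of maximal run
   lengths is k itself, i.e. the i-th maximal run occupies positions
   [run_start k i, run_start k (i+1)) (of length k i), is constant there, and
   the next run carries a different symbol (maximality). *)
Definition is_K13 (k : nat -> nat) : Prop :=
  [/\ forall p, k p = 1 \/ k p = 3,
      k 0 = 1 &
      forall i,
        (forall p, run_start k i <= p < run_start k i.+1 -> k p = k (run_start k i))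
        /\ k (run_start k i.+1) <> k (run_start k i)].

(* Generation operator G(R, s): runs r_1, r_2, ... alternating s, 4-s, s, ... *)
Fixpoint gen (R : seq nat) (s : nat) : seq nat :=
  match R with
  | [::] => [::]
  | r :: R' => nseq r s ++ gen R' (4 - s)
  end.

(* BP n = (B_{n+1}, P_{n+1}). *)
Fixpoint BP (n : nat) : seq nat * seq nat :=
  match n with
  | 0 => (gen [:: 1; 3; 3; 3; 1] 1, [:: 3])
  | n'.+1 => let (b, p) := BP n' in (b ++ p ++ b, gen p 3)
  end.

(* B n = B_n for n >= 1 (B 0 is a junk value equal to B_1). *)
Definition B (n : nat) : seq nat := (BP n.-1).1.
Definition P (n : nat) : seq nat := (BP n.-1).2.

(* Main.v *)
Require Import Defs.
From mathcomp Require Import all_boot.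
From mathcomp Require Import zify.

Lemma gen_cat X Y s : s <= 4 ->
  gen (X ++ Y) s = gen X s ++ gen Y (if odd (size X) then 4 - s else s).
Proof.
elim: X s => [|x X IH] s hs //=.
rewrite IH; last lia.
rewrite -catA; congr (_ ++ (_ ++ _)).
by case: (odd (size X)) => //=; congr gen; lia.
Qed.

Lemma size_gen R s : size (gen R s) = sumn R.
Proof. by elim: R s => [|r R IH] s //=; rewrite size_cat size_nseq IH. Qed.

Definition good (x : nat) := (x == 1) || (x == 3).

Lemma gen_good R s : good s -> all good (gen R s).
Proof.
elim: R s => [|r R IH] s hs //=.
rewrite all_cat IH; last by move: hs; rewrite /good; case/orP=> /eqP -> .
by rewrite andbT; apply/allP => x /nseqP [-> _].
Qed.

Lemma sumn_odd p : all good p -> odd (sumn p) = odd (size p).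
Proof.
elim: p => [|x p IH] //= /andP [hx hp].
by rewrite oddD IH //; move: hx; rewrite /good; case/orP => /eqP ->.
Qed.

Lemma BP_inv m :
  [/\ odd (size (BP m).1), odd (size (BP m).2), all good (BP m).2
    & gen (BP m).1 1 = (BP m.+1).1].
Proof.
elim: m => [|m IH] /=; first by split.
case E: (BP m) IH => [b p] /= [ob op gp gb].
have ob' : odd (size (b ++ p ++ b)) by rewrite !size_cat !oddD ob op.
split => //.
- by rewrite size_gen sumn_odd.
- by apply: gen_good.
- rewrite gen_cat // ob gen_cat // op /= gb.
  by rewrite E /= -!catA.
Qed.

Section K.
Variable k : nat -> nat.
Hypothesis hk : is_K13 k.

Lemma rs_sym i : k (run_start k i) = if odd i then 3 else 1.
Proof.
case: hk => h13 h0 hr.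
elim: i => [|i IH]; first by rewrite /run_start big_ord0.
have [_ hne] := hr i.
rewrite /= ; case: (odd i) IH hne => /= IH hne;
case: (h13 (run_start k i.+1)); lia.
Qed.

Lemma rsS i : run_start k i.+1 = run_start k i + k i.
Proof. by rewrite /run_start big_ord_recr. Qed.

Lemma sumn_mkseq m : sumn (mkseq k m) = run_start k m.
Proof.
elim: m => [|q IHq]; first by rewrite /run_start big_ord0.
by rewrite mkseqS -cats1 sumn_cat IHq rsS /= addn0.
Qed.

Lemma gen_pref m j : j < run_start k m -> nth 0 (gen (mkseq k m) 1) j = k j.
Proof.
case: hk => h13 h0 hr.
elim: m j => [|m IH] j; first by rewrite /run_start big_ord0.
rewrite mkseqS -cats1 gen_cat // size_mkseq rsS => hj.
rewrite nth_cat size_gen sumn_mkseq.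
case: ltnP => hl; first exact: IH.
rewrite /= cats0 nth_nseq ifT; last lia.
have [hc _] := hr m.
rewrite hc; last by rewrite rsS; lia.
by rewrite rs_sym; case: (odd m).
Qed.


Definition pref (w : seq nat) := forall i, i < size w -> nth 0 w i = k i.

Lemma pref_gen w : pref w -> pref (gen w 1).
Proof.
move=> hw.
have -> : w = mkseq k (size w).
  apply: (@eq_from_nth _ 0); first by rewrite size_mkseq.
  by move=> i hi; rewrite nth_mkseq // hw.
move=> i; rewrite size_gen sumn_mkseq; exact: gen_pref.
Qed.

Lemma pref_B1 : pref (BP 0).1.
Proof.
case: hk => h13 h0 hr.
have k1 : k 1 = 3.
  have [_ hne] := hr 0.
  move: hne; rewrite /run_start big_ord1 big_ord0 h0 /=.
  by case: (h13 1); lia.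
have p2 : pref [:: 1; 3].
  by case=> [|[|i]] //= _; rewrite ?h0 ?k1.
have p4 := @pref_gen _ p2.
have p10 := @pref_gen _ p4.
have k4 : k 4 = 1 by rewrite -(p10 4).
have k2 : k 2 = 3 by rewrite -(p10 2).
have k3 : k 3 = 3 by rewrite -(p10 3).
have p5 : pref [:: 1; 3; 3; 3; 1].
  by case=> [|[|[|[|[|i]]]]] //= _; rewrite ?h0 ?k1.
exact: @pref_gen _ p5.
Qed.

Lemma pref_BP m : pref (BP m).1.
Proof.
elim: m => [|m IH]; first exact: pref_B1.
have [_ _ _ <-] := BP_inv m.
exact: pref_gen.
Qed.

End K.

Lemma size_BP m : m < size (BP m).1.
Proof.
elim: m => [|m IH] //=.
case: (BP m) IH => b p /= IH.
rewrite !size_cat; lia.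
Qed.

Theorem theorem4p1 (k : nat -> nat) :
  is_K13 k ->
  (forall n, 1 <= n ->
     (forall i, i < size (B n) -> nth 0 (B n) i = k i)
     /\ B n.+1 = gen (B n) 1)
  /\ (forall i, exists N, forall n, N <= n ->
        i < size (B n) /\ nth 0 (B n) i = k i).
Proof.
move=> hk; split.
  case=> [|n] // _; split; first exact: pref_BP.
  by rewrite /B /=; have [_ _ _ ->] := BP_inv n.
move=> i; exists i.+1; case=> [|n] // hn.
have hs := size_BP n.
have hi : i < size (B n.+1) by rewrite /B /=; lia.
by split => //; apply: pref_BP.
Qed.
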